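(* Assume the Smoothness Assumption and the Extended KŁ Assumption (see context), and $r>\rho$. Let $y\in\mathcal Y$, $z\in\mathbb R^{d_x}$, let $y(z)$ be any element of $\arg\max_{y'\in\mathcal Y}d_r(y',z)$, and let $y_+(z)=\mathrm{proj}_{\mathcal Y}\big(y+\alpha_y\nabla_yF(x_r(y,z),y)\big)$ with $\alpha_y>0$. Then $$\|x_r(y(z),z)-x_r(y_+(z),z)\|^2\le\varpi\|y-y_+(z)\|^2\quad\text{if }\theta\in[0,\tfrac12],$$ $$\|x_r(y(z),z)-x_r(y_+(z),z)\|^2\le\kappa\|y-y_+(z)\|^{1/\theta}\quad\text{if }\theta\in(\tfrac12,1],$$ where $\varpi=\frac{2(\ell D_{\mathcal Y})^{1-2\theta}}{r-\rho}\cdot\frac{\frac2{\alpha_y^2}+2L_y^2\sigma_2^2+2L_y^2}{\mu^2}$, $\kappa=\frac2{r-\rho}\Big(\frac{\sqrt{\frac2{\alpha_y^2}+2L_y^2\sigma_2^2+2L_y^2}}{\mu}\Big)^{1/\theta}$, and $\sigma_2=2+\frac{L_y}{r-\rho}$.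
   Context: Let $\mathcal X\subseteq\mathbb R^{d_x}$, $\mathcal Y\subseteq\mathbb R^{d_y}$ be nonempty closed convex sets, $\mathbb P$ a distribution on $\Xi$, $f:\mathbb R^{d_x}\times\mathbb R^{d_y}\times\Xi\to\mathbb R$, $F(x,y)=\mathbb E_{\xi\sim\mathbb P}[f(x,y;\xi)]$. Smoothness Assumption: (i) $\mathcal Y$ compact with diameter $D_{\mathcal Y}$; (ii) $\mathbb E|f(x_1,y_1;\xi)-f(x_2,y_2;\xi)|\le\ell(\|x_1-x_2\|+\|y_1-y_2\|)$ on $\mathcal X\times\mathcal Y$; (iii) for all $x,x_i\in\mathcal X$, $y,y_i\in\mathcal Y$: $\mathbb E\|\nabla_xf(x_1,y;\xi)-\nabla_xf(x_2,y;\xi)\|^2\le L_x^2\|x_1-x_2\|^2$, $\mathbb E\|\nabla_xf(x,y_1;\xi)-\nabla_xf(x,y_2;\xi)\|^2\le L_y^2\|y_1-y_2\|^2$, $\mathbb E\|\nabla_yf(x_1,y_1;\xi)-\nabla_yf(x_2,y_2;\xi)\|^2\le L_y^2(\|x_1-x_2\|^2+\|y_1-y_2\|^2)$; (iv) $F(\cdot,y)+\frac\rho2\|\cdot\|^2$ convex on $\mathcal X$ for each $y\in\mathcal Y$; (v) $\mathbb E[\nabla f(x,y;\xi)\mid(x,y)]=\nabla F(x,y)$ with variance bounds $\sigma_x^2,\sigma_y^2$ for the $x$- and $y$-gradients; (vi) $\max_y\min_xF\ge\underline F$. Extended KŁ Assumption: there exist $\mu>0$, $\theta\in[0,1]$ with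 $\mathrm{dist}(0,-\nabla_yF(x,y)+\mathcal N_{\mathcal Y}(y))\ge\mu(\max_{y'\in\mathcal Y}F(x,y')-F(x,y))^\theta$ for all $x\in\mathcal X,y\in\mathcal Y$ ($\mathcal N_{\mathcal Y}$ the normal cone). Notation: $F_r(x,y,z)=F(x,y)+\frac r2\|x-z\|^2$, $x_r(y,z)=\arg\min_{x\in\mathcal X}F_r(x,y,z)$, $d_r(y,z)=\min_{x\in\mathcal X}F_r(x,y,z)$. *)

(* Defs.v *)
From HB Require Import structures.
From mathcomp Require Import all_boot all_order all_algebra.
From mathcomp Require Import all_classical all_reals all_analysis.
Set Implicit Arguments. Unset Strict Implicit. Unset Printing Implicit Defensive.
Import Order.TTheory GRing.Theory Num.Theory.
Import numFieldNormedType.Exports.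
Local Open Scope classical_set_scope.
Local Open Scope ring_scope.

Section Defs.
Variable R : realType.

Definition dotv n (v w : 'rV[R]_n) : R := \sum_(i < n) v ord0 i * w ord0 i.
Definition enorm n (v : 'rV[R]_n) : R := Num.sqrt (dotv v v).

Definition convex_setv n (S : set 'rV[R]_n) : Prop :=
  forall a b, S a -> S b -> forall t : R, 0 <= t <= 1 ->
    S ((1 - t) *: a + t *: b).
Definition convex_onv n (S : set 'rV[R]_n) (g : 'rV[R]_n -> R) : Prop :=
  forall a b, S a -> S b -> forall t : R, 0 <= t <= 1 ->
    g ((1 - t) *: a + t *: b) <= (1 - t) * g a + t * g b.

Definition ncone n (S : set 'rV[R]_n) (y : 'rV[R]_n) : set 'rV[R]_n :=
  [set v | forall y', S y' -> dotv v (y' - y) <= 0].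

(* dist(0, -g + N_S(y)) *)
Definition dist0_ncone n (S : set 'rV[R]_n) (g y : 'rV[R]_n) : R :=
  inf [set enorm (v - g) | v in ncone S y].

Definition is_proj n (S : set 'rV[R]_n) (v p : 'rV[R]_n) : Prop :=
  S p /\ forall q, S q -> enorm (v - p) <= enorm (v - q).

Definition diam n (S : set 'rV[R]_n) : R :=
  sup [set enorm (a - b) | a in S & b in S].

(* Power with the convention 0^0 = 0 (used in the KL inequality). *)
Definition klpow (a th : R) : R := if a == 0 then 0 else a `^ th.

Definition has_grad2 dx dy (h : 'rV[R]_dx -> 'rV[R]_dy -> R)
  (gx : 'rV[R]_dx) (gy : 'rV[R]_dy) (x : 'rV[R]_dx) (y : 'rV[R]_dy) : Prop :=
  differentiable (fun p : 'rV[R]_dx * 'rV[R]_dy => h p.1 p.2) (x, y) /\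
  forall p : 'rV[R]_dx * 'rV[R]_dy,
    'd (fun p : 'rV[R]_dx * 'rV[R]_dy => h p.1 p.2) (x, y) p
      = dotv gx p.1 + dotv gy p.2.

Definition Fr dx dy (F : 'rV[R]_dx -> 'rV[R]_dy -> R) (r : R)
  (x : 'rV[R]_dx) (y : 'rV[R]_dy) (z : 'rV[R]_dx) : R :=
  F x y + r / 2 * enorm (x - z) ^+ 2.

Definition is_xr dx dy (X : set 'rV[R]_dx) (F : 'rV[R]_dx -> 'rV[R]_dy -> R)
  (r : R) (y : 'rV[R]_dy) (z x : 'rV[R]_dx) : Prop :=
  X x /\ forall x', X x' -> Fr F r x y z <= Fr F r x' y z.

Definition dr dx dy (X : set 'rV[R]_dx) (F : 'rV[R]_dx -> 'rV[R]_dy -> R)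
  (r : R) (y : 'rV[R]_dy) (z : 'rV[R]_dx) : R :=
  inf [set Fr F r x y z | x in X].

End Defs.

(* Main.v *)
Require Import Defs.
From HB Require Import structures.
From mathcomp Require Import all_boot all_order all_algebra.
From mathcomp Require Import all_classical all_reals all_analysis.
Import Order.TTheory GRing.Theory Num.Theory.
Import numFieldNormedType.Exports.
Local Open Scope classical_set_scope.
Local Open Scope ring_scope.

From mathcomp Require Import ring lra.

Set Implicit Arguments. Unset Strict Implicit. Unset Printing Implicit Defensive.



Section Dot.
Variable R : realType.
Variable n : nat.
Implicit Types u v w : 'rV[R]_n.

Lemma dotvC u v : dotv u v = dotv v u.
Proof. by apply: eq_bigr => i _; rewrite mulrC. Qed.

Lemma dotvDl u v w : dotv (u + v) w = dotv u w + dotv v w.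
Proof. by rewrite /dotv -big_split; apply: eq_bigr => i _; rewrite !mxE mulrDl. Qed.

Lemma dotvZl (a : R) u w : dotv (a *: u) w = a * dotv u w.
Proof. by rewrite /dotv mulr_sumr; apply: eq_bigr => i _; rewrite !mxE mulrA. Qed.

Lemma dotvNl u w : dotv (- u) w = - dotv u w.
Proof. by rewrite -scaleN1r dotvZl mulN1r. Qed.

Lemma dotvBl u v w : dotv (u - v) w = dotv u w - dotv v w.
Proof. by rewrite dotvDl dotvNl. Qed.

Lemma dotvDr u v w : dotv w (u + v) = dotv w u + dotv w v.
Proof. by rewrite dotvC dotvDl !(dotvC w). Qed.

Lemma dotvZr (a : R) u w : dotv w (a *: u) = a * dotv w u.
Proof. by rewrite dotvC dotvZl dotvC. Qed.

Lemma dotvNr u w : dotv w (- u) = - dotv w u.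
Proof. by rewrite dotvC dotvNl dotvC. Qed.

Lemma dotvBr u v w : dotv w (u - v) = dotv w u - dotv w v.
Proof. by rewrite dotvDr dotvNr. Qed.

Lemma dotv0l w : dotv 0 w = 0.
Proof. by rewrite /dotv big1 // => i _; rewrite mxE mul0r. Qed.

Lemma dotv_ge0 u : 0 <= dotv u u.
Proof. by apply: sumr_ge0 => i _; rewrite -expr2 sqr_ge0. Qed.

Lemma enorm_sq u : enorm u ^+ 2 = dotv u u.
Proof. by rewrite /enorm sqr_sqrtr // dotv_ge0. Qed.

Lemma enorm_ge0 u : 0 <= enorm u.
Proof. exact: sqrtr_ge0. Qed.

Lemma enormN u : enorm (- u) = enorm u.
Proof. by rewrite /enorm dotvNl dotvNr opprK. Qed.

Lemma enormB u v : enorm (u - v) = enorm (v - u).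
Proof. by rewrite -enormN opprB. Qed.

Lemma enorm0 : enorm (0 : 'rV[R]_n) = 0.
Proof. by rewrite /enorm dotv0l sqrtr0. Qed.

Lemma dotv_amgm u v (s : R) : 0 < s ->
  2 * dotv u v <= s * dotv u u + s^-1 * dotv v v.
Proof.
move=> s0; rewrite /dotv !mulr_sumr -big_split /=; apply: ler_sum => i _.
have h : 0 <= s^-1 * (s * u ord0 i - v ord0 i) ^+ 2.
  by rewrite mulr_ge0 ?invr_ge0 ?sqr_ge0 ?ltW.
have e : s^-1 * (s * u ord0 i - v ord0 i) ^+ 2 =
  s * (u ord0 i * u ord0 i) + s^-1 * (v ord0 i * v ord0 i) - 2 * (u ord0 i * v ord0 i).
  by field; rewrite gt_eqF.
by rewrite e subr_ge0 in h.
Qed.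

Lemma enorm_sqD u v : enorm (u + v) ^+ 2 <= 2 * enorm u ^+ 2 + 2 * enorm v ^+ 2.
Proof.
rewrite !enorm_sq dotvDl !dotvDr (dotvC v u).
have := @dotv_amgm u v 1 ltr01. rewrite invr1 !mul1r. lra.
Qed.

End Dot.



Section Deriv.
Variable R : realType.

Lemma dir_deriv dx dy (F : 'rV[R]_dx -> 'rV[R]_dy -> R) gx gy x y u :
  has_grad2 F gx gy x y ->
  (fun t : R => t^-1 * (F (x + t *: u) y - F x y)) @ 0^' --> dotv gx u.
Proof.
case=> dF dE.
set h := fun p : 'rV[R]_dx * 'rV[R]_dy => F p.1 p.2.
have C := @diff_derivable _ _ _ h (x,y) (u,0) dF.
have D := @deriveE _ _ _ h (x,y) (u, 0) dF.
rewrite dE /= in D. rewrite (dotvC gy) dotv0l addr0 in D.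
have C' : (fun t : R => t^-1 *: ((h \o shift (x, y)) (t *: (u, 0)) - h (x, y))) @ 0^' --> 'D_(u,0) h (x,y) := C.
rewrite D in C'.
suff -> : (fun t : R => t^-1 * (F (x + t *: u) y - F x y)) =
  (fun t : R => t^-1 *: ((h \o shift (x, y)) (t *: (u, 0)) - h (x, y))) by [].
by apply/funext => t; rewrite /h /= scaler0 add0r [t *: u + x]addrC.
Qed.

Lemma lim_le_aff (q : R -> R) (D A B : R) :
  q @ 0^' --> D -> (forall t : R, 0 < t <= 1 -> q t <= A + B * t) -> D <= A.
Proof.
move=> qD hq.
have qD' := cvg_dnbhs_at_right qD.
have l1 : lim (q @ 0^'+) = D by exact: (cvg_lim (@Rhausdorff R) qD').
have c2 : (fun t => A + B * t) @ 0^'+ --> A + B * 0.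
  apply: cvg_at_right_filter; apply: cvgD; first exact: cvg_cst.
  apply: cvgM; first exact: cvg_cst.
  exact: cvg_id.
rewrite mulr0 addr0 in c2.
have l2 : lim ((fun t => A + B * t) @ 0^'+) = A by exact: (cvg_lim (@Rhausdorff R) c2).
rewrite -l1 -l2; apply: ler_lim; [by apply/cvg_ex; exists D| by apply/cvg_ex; exists A|].
near=> t; apply: hq; apply/andP; split; near: t.
  exact: nbhs_right_gt.
by apply: nbhs_right_le; rewrite ltr01.
Unshelve. all: by end_near.
Qed.

End Deriv.



Section Conv.
Variable R : realType.
Variables dx dy : nat.
Variable X : set 'rV[R]_dx.
Variable Y : set 'rV[R]_dy.
Variable F : 'rV[R]_dx -> 'rV[R]_dy -> R.
Variable gFx : 'rV[R]_dx -> 'rV[R]_dy -> 'rV[R]_dx.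
Variable gFy : 'rV[R]_dx -> 'rV[R]_dy -> 'rV[R]_dy.
Variables rho r : R.
Variable z : 'rV[R]_dx.
Hypothesis convX : convex_setv X.
Hypothesis grad : forall x y, X x -> Y y -> has_grad2 F (gFx x y) (gFy x y) x y.
Hypothesis wconv : forall y, Y y -> convex_onv X (fun x => F x y + rho / 2 * enorm x ^+ 2).

Lemma comb_eq n (a b : 'rV[R]_n) t : (1 - t) *: a + t *: b = a + t *: (b - a).
Proof. by apply/rowP => i; rewrite !mxE; ring. Qed.

Lemma normq n (a b : 'rV[R]_n) t :
  enorm ((1 - t) *: a + t *: b) ^+ 2 =
  (1 - t) * enorm a ^+ 2 + t * enorm b ^+ 2 - t * (1 - t) * enorm (b - a) ^+ 2.
Proof.
rewrite !enorm_sq /dotv !mulr_sumr -big_split -sumrB /=.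
by apply: eq_bigr => i _; rewrite !mxE; ring.
Qed.

Lemma normq2 n (w u : 'rV[R]_n) t :
  enorm (w + t *: u) ^+ 2 = enorm w ^+ 2 + 2 * t * dotv w u + t ^+ 2 * enorm u ^+ 2.
Proof.
rewrite !enorm_sq /dotv !mulr_sumr -!big_split /=.
by apply: eq_bigr => i _; rewrite !mxE; ring.
Qed.

Lemma grad_conv x1 x2 y : X x1 -> X x2 -> Y y ->
  dotv (gFx x1 y) (x2 - x1) <= F x2 y - F x1 y + rho / 2 * enorm (x2 - x1) ^+ 2.
Proof.
move=> X1 X2 Yy.
set E := enorm (x2 - x1) ^+ 2.
apply: (@lim_le_aff R (fun t => t^-1 * (F (x1 + t *: (x2 - x1)) y - F x1 y)) _ _ (- (rho / 2 * E))).
  exact: (dir_deriv (u:=x2 - x1) (grad X1 Yy)).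
move=> t /andP[t0 t1].
have := wconv Yy X1 X2 (t:=t); rewrite t1 ltW // => /(_ isT).
rewrite normq comb_eq -/E => H.
rewrite ler_pdivrMl //.
have eq1 : t * (F x2 y - F x1 y + rho / 2 * E + - (rho / 2 * E) * t) =
  (1 - t) * (F x1 y + rho / 2 * enorm x1 ^+ 2) + t * (F x2 y + rho / 2 * enorm x2 ^+ 2)
  - F x1 y - rho / 2 * ((1 - t) * enorm x1 ^+ 2 + t * enorm x2 ^+ 2 - t * (1 - t) * E) by ring.
lra.
Qed.

Lemma grad_opt y xs x : Y y -> is_xr X F r y z xs -> X x ->
  0 <= dotv (gFx xs y) (x - xs) + r * dotv (xs - z) (x - xs).
Proof.
move=> Yy [Xs Hmin] Xx.
set E := enorm (x - xs) ^+ 2.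
suff : - dotv (gFx xs y) (x - xs) <= r * dotv (xs - z) (x - xs) by lra.
apply: (@lim_le_aff R (fun t => - (t^-1 * (F (xs + t *: (x - xs)) y - F xs y))) _ _ (r / 2 * E)).
  by apply: cvgN; exact: (dir_deriv (u:=x - xs) (grad Xs Yy)).
move=> t /andP[t0 t1].
have Xp : X (xs + t *: (x - xs)).
  by rewrite -comb_eq; apply: convX => //; rewrite t1 ltW.
have := Hmin _ Xp; rewrite /Fr.
have -> : xs + t *: (x - xs) - z = (xs - z) + t *: (x - xs).
  by apply/rowP => i; rewrite !mxE; ring.
rewrite normq2 -/E => H.
rewrite -mulrN ler_pdivrMl //.
set W := dotv (xs - z) (x - xs).
have eq1 : t * (r * W + r / 2 * E * t) = r / 2 * (2 * t * W + t ^+ 2 * E).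
  by field.
rewrite eq1. move: H. set N := enorm (xs - z) ^+ 2. set Fp := F (xs + _) y. set Fs := F xs y. move=> H. rewrite -/W in H. lra.
Qed.

Lemma strong_conv y xs x : Y y -> is_xr X F r y z xs -> X x ->
  (r - rho) / 2 * enorm (x - xs) ^+ 2 <= Fr F r x y z - Fr F r xs y z.
Proof.
move=> Yy hxs Xx.
have Xs := hxs.1.
have h1 := grad_opt Yy hxs Xx.
have h2 := grad_conv Xs Xx Yy.
rewrite /Fr.
have -> : x - z = (xs - z) + 1 *: (x - xs) by apply/rowP => i; rewrite !mxE; ring.
rewrite normq2 expr1n mulr1 mul1r.
lra.
Qed.

Lemma xr_lip y1 y2 x1 x2 : rho < r -> Y y1 -> Y y2 ->
  is_xr X F r y1 z x1 -> is_xr X F r y2 z x2 ->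
  (r - rho) ^+ 2 * enorm (x1 - x2) ^+ 2 <= enorm (gFx x1 y1 - gFx x1 y2) ^+ 2.
Proof.
move=> rr Y1 Y2 h1 h2.
have X1 := h1.1; have X2 := h2.1.
have b1 := grad_opt Y1 h1 X2.
have b2 := grad_opt Y2 h2 X1.
have a1 := grad_conv X1 X2 Y2.
have a2 := grad_conv X2 X1 Y2.
have m0 : 0 < r - rho by rewrite subr_gt0.
have sp : 0 < (r - rho)^-1 by rewrite invr_gt0.
have am := @dotv_amgm _ _ (gFx x1 y1 - gFx x1 y2) (x2 - x1) (r - rho)^-1 sp.
rewrite invrK -!enorm_sq dotvBl in am.
rewrite -(opprB x2 x1) !dotvNr enormN in b2 a2.
have e1 : dotv (x2 - z) (x2 - x1) = dotv (x1 - z) (x2 - x1) + enorm (x2 - x1) ^+ 2.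
  by rewrite enorm_sq -dotvDl; congr dotv; apply/rowP => i; rewrite !mxE; ring.
rewrite e1 in b2.
rewrite (enormB x1 x2).
set E := enorm (x2 - x1) ^+ 2 in am a1 a2 b1 b2 e1 *.
set A := enorm (gFx x1 y1 - gFx x1 y2) ^+ 2 in am *.
have h3 : (r - rho) * E <= (r - rho)^-1 * A.
  move: am a1 a2 b1 b2; set P := dotv _ _; set Q := dotv _ _; set S := dotv _ _; set W := dotv _ _.

  nra.
have := ler_wpM2l (ltW m0) h3.
have -> : (r - rho) * ((r - rho)^-1 * A) = A by rewrite mulrA mulfV ?gt_eqF // mul1r.
by rewrite mulrA -expr2.
Qed.

End Conv.



Section Jensen.
Variable R : realType.
Variables (d : measure_display) (T : measurableType d) (P : probability T R).

Lemma jensen1 (g : T -> R) (a : R) :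
  P.-integrable setT (fun x => (g x)%:E) ->
  (\int[P]_x (g x)%:E = a%:E)%E ->
  ((a ^+ 2)%:E <= \int[P]_x ((g x) ^+ 2)%:E)%E.
Proof.
move=> ig ga.
have mg : measurable_fun setT g by apply/measurable_realfun.measurable_EFinP; exact: (measurable_int _ ig).
have mg2 : measurable_fun setT (fun x => g x ^+ 2) by exact: measurable_realfun.measurable_funX.
have [->|fin] := eqVneq (\int[P]_x ((g x) ^+ 2)%:E)%E +oo%E; first by rewrite leey.
have ig2 : P.-integrable setT (fun x => ((g x) ^+ 2)%:E).
  apply/integrableP; split; first exact/measurable_realfun.measurable_EFinP.
  under eq_integral do rewrite gee0_abs ?lee_fin ?sqr_ge0 //.
  by rewrite ltey.
have i1 : P.-integrable setT (fun x => ((2 * a)%:E * (g x)%:E)%E) by exact: integrableZl.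
have i2 : P.-integrable setT (EFin \o cst (a ^+ 2)) by exact: finite_measure_integrable_cst.
have i3 := integrableB measurableT i1 i2.
have -> : (a ^+ 2)%:E = (\int[P]_x (((2 * a)%R%:E * (g x)%:E) - (EFin \o cst (a ^+ 2)%R) x))%E.
  rewrite integralB // integralZl // ga /=.
  rewrite integral_cst //. set m := (X in (_ - _ * X)%E). have -> : m = 1%E by exact: probability_setT. rewrite mule1 -EFinM -EFinB; congr EFin; ring.
apply: le_integral => // x _.
rewrite /= -EFinM -EFinB lee_fin.
have := sqr_ge0 (g x - a). lra.
Qed.

Lemma jensen_vec n (w : T -> 'rV[R]_n) (G : 'rV[R]_n) :
  (forall i, P.-integrable setT (fun x => (w x ord0 i)%:E)) ->
  (forall i, \int[P]_x (w x ord0 i)%:E = (G ord0 i)%:E)%E ->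
  ((enorm G ^+ 2)%:E <= \int[P]_x ((enorm (w x)) ^+ 2)%:E)%E.
Proof.
move=> iw wG.
under eq_integral do rewrite enorm_sq /dotv -sumEFin.
rewrite ge0_integral_sum //; last first.
  by move=> i x _; rewrite lee_fin -expr2 sqr_ge0.
  move=> i; apply/measurable_realfun.measurable_EFinP.
  have mi : measurable_fun setT (fun x => w x ord0 i).
    by apply/measurable_realfun.measurable_EFinP; exact: (measurable_int _ (iw i)).
  by apply: measurable_realfun.measurable_funM.
rewrite enorm_sq /dotv -sumEFin; apply: lee_sum => i _.
rewrite -!expr2; exact: jensen1.
Qed.

Lemma jensen_diff n (w1 w2 : T -> 'rV[R]_n) (G1 G2 : 'rV[R]_n) :
  (forall i, P.-integrable setT (fun x => (w1 x ord0 i)%:E)) ->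
  (forall i, P.-integrable setT (fun x => (w2 x ord0 i)%:E)) ->
  (forall i, \int[P]_x (w1 x ord0 i)%:E = (G1 ord0 i)%:E)%E ->
  (forall i, \int[P]_x (w2 x ord0 i)%:E = (G2 ord0 i)%:E)%E ->
  ((enorm (G1 - G2) ^+ 2)%:E <= \int[P]_x ((enorm (w1 x - w2 x)) ^+ 2)%:E)%E.
Proof.
move=> i1 i2 e1 e2.
have E i : (fun x => ((w1 x - w2 x) ord0 i)%:E) = (fun x => ((w1 x ord0 i)%:E - (w2 x ord0 i)%:E)%E).
  by apply/funext => x; rewrite !mxE EFinB.
apply: (jensen_vec (w := fun x => w1 x - w2 x) (G := G1 - G2)) => i.
  by rewrite E; apply: integrableB.
rewrite E integralB // e1 e2 !mxE EFinB //.
Qed.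

End Jensen.



Section Misc.
Variable R : realType.

Lemma proj_vi n (Y : set 'rV[R]_n) v p : convex_setv Y -> is_proj Y v p ->
  forall q, Y q -> dotv (v - p) (q - p) <= 0.
Proof.
move=> cY [Yp Hp] q Yq.
set W := dotv (v - p) (q - p).
set E := enorm (q - p) ^+ 2.
apply: (@lim_le_aff R (fun _ => W) W 0 (E / 2)); first exact: cvg_cst.
move=> t /andP[t0 t1].
have Yt : Y ((1 - t) *: p + t *: q) by apply: cY => //; rewrite t1 ltW.
have := Hp _ Yt.
have -> : v - ((1 - t) *: p + t *: q) = (v - p) + (- t) *: (q - p).
  by apply/rowP => i; rewrite !mxE; ring.
move=> H.
have H2 : enorm (v - p) ^+ 2 <= enorm (v - p + - t *: (q - p)) ^+ 2.
  have := enorm_ge0 (v - p). nra.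
rewrite normq2 -/E -/W sqrrN in H2.
have : 2 * t * W <= t ^+ 2 * E by lra.
move=> H3.
rewrite -(ler_pM2l t0).
have -> : t * (0 + E / 2 * t) = (t ^+ 2 * E) / 2 by field.
lra.
Qed.


Lemma compact_enorm_bound n (Y : set 'rV[R]_n) : compact Y ->
  exists M, forall a b, Y a -> Y b -> enorm (a - b) <= M.
Proof.
move=> cY.
have [M0 [_ HM]] := compact_bounded cY.
have M01 : M0 < M0 + 1 by rewrite ltrDl.
have HM1 := HM (M0 + 1) M01.
set M := M0 + 1 in HM1.
exists (Num.sqrt (((2 * M) ^+ 2) *+ n)) => a b Ya Yb.
rewrite /enorm ler_wsqrtr //.
have -> : (2 * M) ^+ 2 *+ n = \sum_(i < n) (2 * M) ^+ 2.
  by rewrite sumr_const card_ord.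
rewrite /dotv.
apply: ler_sum => i _.
have na : `|a ord0 i| <= M.
  apply: le_trans (HM1 _ Ya).
  have -> : `|a| = mx_norm a by [].
  rewrite mx_normrE.
  exact: (le_trans _ (le_bigmax _ _ (ord0, i))).
have nb : `|b ord0 i| <= M.
  apply: le_trans (HM1 _ Yb).
  have -> : `|b| = mx_norm b by [].
  rewrite mx_normrE.
  exact: (le_trans _ (le_bigmax _ _ (ord0, i))).
rewrite !mxE.
move: na nb; rewrite !ler_norml => /andP[a1 a2] /andP[b1 b2].
nra.
Qed.

Lemma dr_eq dx dy (X : set 'rV[R]_dx) (F : 'rV[R]_dx -> 'rV[R]_dy -> R) r y z x :
  is_xr X F r y z x -> dr X F r y z = Fr F r x y z.
Proof.
case=> Xx Hm; rewrite /dr; apply/eqP; rewrite eq_le; apply/andP; split.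
  have hl : has_lbound [set Fr F r x0 y z | x0 in X].
    by exists (Fr F r x y z) => _ [x' Xx' <-]; exact: Hm.
  by apply: (ge_inf hl); exists x.
apply: lb_le_inf; first by exists (Fr F r x y z), x.
by move=> _ [x' Xx' <-]; exact: Hm.
Qed.

Lemma dist_le n (Y : set 'rV[R]_n) g y v : ncone Y y v ->
  dist0_ncone Y g y <= enorm (v - g).
Proof.
move=> hv; rewrite /dist0_ncone.
have hl : has_lbound [set enorm (v0 - g) | v0 in ncone Y y].
  by exists 0 => _ [v' _ <-]; exact: enorm_ge0.
by apply: (ge_inf hl); exists v.
Qed.

Lemma dist_ge0 n (Y : set 'rV[R]_n) g y : 0 <= dist0_ncone Y g y.
Proof.
rewrite /dist0_ncone; apply: lb_le_inf.
  exists (enorm (0 - g)), 0 => //.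
  by move=> q _; rewrite dotv0l.
by move=> _ [v' _ <-]; exact: enorm_ge0.
Qed.

Lemma ncone_scale n (Y : set 'rV[R]_n) y v (a : R) : 0 <= a -> ncone Y y v -> ncone Y y (a *: v).
Proof. by move=> a0 hv q Yq; rewrite dotvZl mulr_ge0_le0 // hv. Qed.

Variables (d : measure_display) (T : measurableType d) (P : probability T R).

Lemma Flip dx dy (X : set 'rV[R]_dx) (Y : set 'rV[R]_dy) (f : 'rV[R]_dx -> 'rV[R]_dy -> T -> R)
  (F : 'rV[R]_dx -> 'rV[R]_dy -> R) (ell : R) x y1 y2 :
 (forall x y, X x -> Y y -> P.-integrable setT (fun xi => (f x y xi)%:E)) ->
 (forall x y, X x -> Y y -> (\int[P]_xi (f x y xi)%:E = (F x y)%:E)%E) ->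
 (forall x1 x2 y1 y2, X x1 -> X x2 -> Y y1 -> Y y2 ->
     (\int[P]_xi (`|f x1 y1 xi - f x2 y2 xi|)%:E
       <= (ell * (enorm (x1 - x2) + enorm (y1 - y2)))%:E)%E) ->
 X x -> Y y1 -> Y y2 -> F x y1 - F x y2 <= ell * enorm (y1 - y2).
Proof.
move=> hint hF hell Xx Y1 Y2.
have := hell x x y1 y2 Xx Xx Y1 Y2; rewrite subrr enorm0 add0r => H.
have i1 := hint _ _ Xx Y1.
have i2 := hint _ _ Xx Y2.
have e : ((F x y1 - F x y2)%:E = \int[P]_xi ((f x y1 xi)%:E - (f x y2 xi)%:E))%E.
  by rewrite integralB_EFin // hF // hF.
have i3 := integrableB measurableT i1 i2.
have m3 := measurable_int _ i3.
have := le_abse_integral P measurableT m3.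
rewrite -e => H2.
rewrite -lee_fin; apply: le_trans (lee_abs _) _.
apply: le_trans H2 _.
apply: le_trans H.
by under eq_integral do rewrite -EFinB abse_EFin.
Qed.

End Misc.


Unset Implicit Arguments. Set Strict Implicit.

Theorem lemmaA7 (R : realType) (dx dy : nat)
  (d : measure_display) (T : measurableType d) (P : probability T R)
  (X : set 'rV[R]_dx) (Y : set 'rV[R]_dy)
  (f : 'rV[R]_dx -> 'rV[R]_dy -> T -> R)
  (gfx : 'rV[R]_dx -> 'rV[R]_dy -> T -> 'rV[R]_dx)
  (gfy : 'rV[R]_dx -> 'rV[R]_dy -> T -> 'rV[R]_dy)
  (F : 'rV[R]_dx -> 'rV[R]_dy -> R)
  (gFx : 'rV[R]_dx -> 'rV[R]_dy -> 'rV[R]_dx)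
  (gFy : 'rV[R]_dx -> 'rV[R]_dy -> 'rV[R]_dy)
  (DY ell Lx Ly rho sigx sigy Flow mu theta r alpha : R) :
  (* X, Y nonempty closed convex *)
  X !=set0 -> closed X -> convex_setv X ->
  Y !=set0 -> closed Y -> convex_setv Y ->
  (* (i) Y compact with diameter DY *)
  compact Y -> DY = diam Y ->
  (* the stochastic model: f(x,y;.) and its gradients are integrable,
     f(.,.;xi) is differentiable with partial gradients gfx, gfy,
     F = E f and F is differentiable with partial gradients gFx, gFy *)
  (forall x y, X x -> Y y -> P.-integrable setT (fun xi => (f x y xi)%:E)) ->
  (forall x y, X x -> Y y -> forall i,
     P.-integrable setT (fun xi => (gfx x y xi ord0 i)%:E)) ->
  (forall x y, X x -> Y y -> forall i,
     P.-integrable setT (fun xi => (gfy x y xi ord0 i)%:E)) ->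
  (forall x y xi, X x -> Y y ->
     has_grad2 (fun x' y' => f x' y' xi) (gfx x y xi) (gfy x y xi) x y) ->
  (forall x y, X x -> Y y -> (\int[P]_xi (f x y xi)%:E = (F x y)%:E)%E) ->
  (forall x y, X x -> Y y -> has_grad2 F (gFx x y) (gFy x y) x y) ->
  (* (ii) *)
  0 <= ell ->
  (forall x1 x2 y1 y2, X x1 -> X x2 -> Y y1 -> Y y2 ->
     (\int[P]_xi (`|f x1 y1 xi - f x2 y2 xi|)%:E
       <= (ell * (enorm (x1 - x2) + enorm (y1 - y2)))%:E)%E) ->
  (* (iii) *)
  0 <= Lx -> 0 <= Ly ->
  (forall x1 x2 y, X x1 -> X x2 -> Y y ->
     (\int[P]_xi ((enorm (gfx x1 y xi - gfx x2 y xi)) ^+ 2)%:E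
       <= (Lx ^+ 2 * enorm (x1 - x2) ^+ 2)%:E)%E) ->
  (forall x y1 y2, X x -> Y y1 -> Y y2 ->
     (\int[P]_xi ((enorm (gfx x y1 xi - gfx x y2 xi)) ^+ 2)%:E
       <= (Ly ^+ 2 * enorm (y1 - y2) ^+ 2)%:E)%E) ->
  (forall x1 x2 y1 y2, X x1 -> X x2 -> Y y1 -> Y y2 ->
     (\int[P]_xi ((enorm (gfy x1 y1 xi - gfy x2 y2 xi)) ^+ 2)%:E
       <= (Ly ^+ 2 * (enorm (x1 - x2) ^+ 2 + enorm (y1 - y2) ^+ 2))%:E)%E) ->
  (* (iv) rho-weak convexity in x *)
  (forall y, Y y -> convex_onv X (fun x => F x y + rho / 2 * enorm x ^+ 2)) ->
  (* (v) unbiasedness (E[grad f] = grad F) and variance bounds *)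
  (forall x y, X x -> Y y -> forall i,
     (\int[P]_xi (gfx x y xi ord0 i)%:E = (gFx x y ord0 i)%:E)%E) ->
  (forall x y, X x -> Y y -> forall i,
     (\int[P]_xi (gfy x y xi ord0 i)%:E = (gFy x y ord0 i)%:E)%E) ->
  0 <= sigx -> 0 <= sigy ->
  (forall x y, X x -> Y y ->
     (\int[P]_xi ((enorm (gfx x y xi - gFx x y)) ^+ 2)%:E <= (sigx ^+ 2)%:E)%E) ->
  (forall x y, X x -> Y y ->
     (\int[P]_xi ((enorm (gfy x y xi - gFy x y)) ^+ 2)%:E <= (sigy ^+ 2)%:E)%E) ->
  (* (vi) max_y min_x F >= Flow *)
  (exists2 y, Y y & forall x, X x -> Flow <= F x y) ->
  (* Extended KL assumption *)
  0 < mu -> 0 <= theta <= 1 ->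
  (forall x y, X x -> Y y ->
     mu * klpow (sup [set F x y' | y' in Y] - F x y) theta
       <= dist0_ncone Y (gFy x y) y) ->
  (* the lemma's data *)
  rho < r -> 0 < alpha ->
  forall (y : 'rV[R]_dy) (z : 'rV[R]_dx) (yz yp xy xa xb : _),
  Y y ->
  (* yz = y(z) in argmax_{y' in Y} d_r(y', z) *)
  Y yz -> (forall y', Y y' -> dr X F r y' z <= dr X F r yz z) ->
  (* xy = x_r(y,z), yp = y_+(z) = proj_Y (y + alpha grad_y F(x_r(y,z), y)) *)
  is_xr X F r y z xy ->
  is_proj Y (y + alpha *: gFy xy y) yp ->
  (* xa = x_r(y(z), z), xb = x_r(y_+(z), z) *)
  is_xr X F r yz z xa -> is_xr X F r yp z xb ->
  let sigma2 := 2 + Ly / (r - rho) in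
  let c := 2 / alpha ^+ 2 + 2 * Ly ^+ 2 * sigma2 ^+ 2 + 2 * Ly ^+ 2 in
  let varpi := 2 * (ell * DY) `^ (1 - 2 * theta) / (r - rho) * (c / mu ^+ 2) in
  let kappa := 2 / (r - rho) * (Num.sqrt c / mu) `^ (theta^-1) in
  (theta <= 1 / 2 -> enorm (xa - xb) ^+ 2 <= varpi * enorm (y - yp) ^+ 2) /\
  (1 / 2 < theta -> enorm (xa - xb) ^+ 2 <= kappa * enorm (y - yp) `^ (theta^-1)).
Proof.
move=> neX clX cvX neY clY cvY cY hDY hint hintx hinty hgradf hF hgrad ell0 hell
  Lx0 Ly0 hLx hLy hLyy hwconv hubx huby sx0 sy0 hvx hvy hlow mu0 hth hKL rr al0
  y z yz yp xy xa xb Yy Yyz hmax hxy hyp hxa hxb sigma2 c varpi kappa.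
have m0 : 0 < r - rho by rewrite subr_gt0.
set m := r - rho in m0 *.
have Yyp := hyp.1.
have Xxy := hxy.1. have Xxa := hxa.1. have Xxb := hxb.1.
have gy_lip : forall x1 x2 y1 y2, X x1 -> X x2 -> Y y1 -> Y y2 ->
    enorm (gFy x1 y1 - gFy x2 y2) ^+ 2 <=
    Ly ^+ 2 * (enorm (x1 - x2) ^+ 2 + enorm (y1 - y2) ^+ 2).
  move=> x1 x2 y1 y2 X1 X2 Y1 Y2; rewrite -lee_fin.
  apply: le_trans (hLyy _ _ _ _ X1 X2 Y1 Y2).
  by apply: jensen_diff => i; [exact: hinty|exact: hinty|exact: huby|exact: huby].
have gx_lip : forall x y1 y2, X x -> Y y1 -> Y y2 ->
    enorm (gFx x y1 - gFx x y2) ^+ 2 <= Ly ^+ 2 * enorm (y1 - y2) ^+ 2.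
  move=> x y1 y2 X1 Y1 Y2; rewrite -lee_fin.
  apply: le_trans (hLy _ _ _ X1 Y1 Y2).
  by apply: jensen_diff => i; [exact: hintx|exact: hintx|exact: hubx|exact: hubx].
set Dv := enorm (y - yp).
have Dv0 : 0 <= Dv by exact: enorm_ge0.
have hxl : m ^+ 2 * enorm (xy - xb) ^+ 2 <= Ly ^+ 2 * Dv ^+ 2.
  apply: le_trans (xr_lip cvX hgrad hwconv rr Yy Yyp hxy hxb) _.
  exact: gx_lip.
have [M HM] := compact_enorm_bound cY.
have hsD : has_sup [set enorm (a - b) | a in Y & b in Y].
  split; first by exists (enorm (y - y)), y => //; exists y.
  by exists M => _ [a Ya [b Yb <-]]; exact: HM.
have hD : forall a b, Y a -> Y b -> enorm (a - b) <= DY.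
  move=> a b Ya Yb; rewrite hDY; apply: (sup_upper_bound hsD).
  by exists a => //; exists b.
set S := sup [set F xb y' | y' in Y].
have ubF : forall y', Y y' -> F xb y' <= F xb yp + ell * DY.
  move=> y' Y'.
  have := Flip hint hF hell Xxb Y' Yyp.
  have := hD _ _ Y' Yyp.
  move=> h1 h2.
  have : ell * enorm (y' - yp) <= ell * DY by exact: ler_wpM2l.
  lra.
have hsS : has_sup [set F xb y' | y' in Y].
  split; first by exists (F xb yp), yp.
  by exists (F xb yp + ell * DY) => _ [y' Y' <-]; exact: ubF.
have S1 : F xb yp <= S by apply: (sup_upper_bound hsS); exists yp.
have S2 : S <= F xb yp + ell * DY.
  apply: ge_sup; first by exists (F xb yp), yp.
  by move=> _ [y' Y' <-]; exact: ubF.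
set Dl := S - F xb yp.
have Dl0 : 0 <= Dl by rewrite subr_ge0.
have Dl1 : Dl <= ell * DY by rewrite /Dl; lra.
have hsc : m / 2 * enorm (xa - xb) ^+ 2 <= Dl.
  have h1 := strong_conv cvX hgrad hwconv Yyz hxa Xxb.
  rewrite enormB in h1.
  have h2 : F xb yz <= S by apply: (sup_upper_bound hsS); exists yz.
  have h3 := hmax _ Yyp.
  rewrite (dr_eq hxb) (dr_eq hxa) in h3.
  move: h1 h3; rewrite /Fr /Dl => h1 h3; rewrite /m; lra.
have hkl := hKL _ _ Xxb Yyp.
rewrite -/S -/Dl in hkl.
set g := gFy xy y.
set v := alpha^-1 *: (y + alpha *: g - yp).
have vN : ncone Y yp v.
  apply: ncone_scale; first by rewrite invr_ge0 ltW.
  by move=> q Yq; exact: (proj_vi cvY hyp).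
have hdist := dist_le (gFy xb yp) vN.
have ev : v - gFy xb yp = alpha^-1 *: (y - yp) + (g - gFy xb yp).
  apply/rowP => i; rewrite !mxE; field; exact: lt0r_neq0.
rewrite ev in hdist.
have hd2 : enorm (alpha^-1 *: (y - yp) + (g - gFy xb yp)) ^+ 2 <= c * Dv ^+ 2.
  apply: le_trans (enorm_sqD _ _) _.
  have e1 : enorm (alpha^-1 *: (y - yp)) ^+ 2 = alpha^-2 * Dv ^+ 2.
    by rewrite !enorm_sq dotvZl dotvZr mulrA -expr2 exprVn.
  rewrite e1.
  have h1 := gy_lip _ _ _ _ Xxy Xxb Yy Yyp.
  rewrite -/g -/Dv in h1.
  have h4 : enorm (xy - xb) ^+ 2 <= sigma2 ^+ 2 * Dv ^+ 2.
    have hs : Ly / m <= sigma2 by rewrite /sigma2; lra.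
    have hs0 : 0 <= Ly / m by rewrite divr_ge0 // ltW.
    have hs2 : (Ly / m) ^+ 2 <= sigma2 ^+ 2.
      by rewrite ler_sqr // ?nnegrE // (le_trans hs0 hs).
    apply: le_trans (ler_wpM2r (sqr_ge0 Dv) hs2).
    rewrite expr_div_n mulrAC ler_pdivlMr ?exprn_gt0 //.
    by rewrite mulrC.
  have h5 : Ly ^+ 2 * (enorm (xy - xb) ^+ 2 + Dv ^+ 2) <=
            Ly ^+ 2 * (sigma2 ^+ 2 * Dv ^+ 2 + Dv ^+ 2).
    by apply: ler_wpM2l; [exact: sqr_ge0| lra].
  rewrite /c.
  have -> : alpha^-2 = 1 / alpha ^+ 2 by rewrite div1r.
  nra.
set E := enorm (alpha^-1 *: (y - yp) + (g - gFy xb yp)) in hdist hd2.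
have E0 : 0 <= E by exact: enorm_ge0.
have c0 : 0 <= c.
  rewrite /c; apply: addr_ge0; [apply: addr_ge0|].
  - by rewrite divr_ge0 // exprn_ge0 // ltW.
  - by apply: mulr_ge0; [apply: mulr_ge0|]; rewrite ?sqr_ge0.
  - by apply: mulr_ge0; rewrite ?sqr_ge0.
have hKE : mu * klpow Dl theta <= E := le_trans hkl hdist.
have Esq : E <= Num.sqrt c * Dv.
  rewrite -(ger0_norm E0) -sqrtr_sqr -(ger0_norm Dv0) -sqrtr_sqr -sqrtrM //.
  by rewrite ler_wsqrtr.
have hxab : enorm (xa - xb) ^+ 2 <= 2 / m * Dl.
  rewrite -(ler_pM2l (_ : 0 < m / 2)); last by rewrite divr_gt0.
  by have -> : m / 2 * (2 / m * Dl) = Dl by field; exact: lt0r_neq0.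
have sc0 : 0 <= Num.sqrt c by exact: sqrtr_ge0.
have m20 : 0 <= 2 / m by rewrite divr_ge0 // ltW.
have [Dz|Dpos] : Dl = 0 \/ 0 < Dl.
  by move: Dl0; rewrite le_eqVlt => /orP[/eqP <-|->]; [left|right].
  have ex0 : enorm (xa - xb) ^+ 2 <= 0 by move: hxab; rewrite Dz mulr0.
  split=> _; apply: le_trans ex0 _.
    rewrite /varpi; apply: mulr_ge0; last exact: sqr_ge0.
    apply: mulr_ge0; last by rewrite divr_ge0 // exprn_ge0 // ltW.
    by rewrite !mulr_ge0 ?invr_ge0 ?powR_ge0 // ltW.
  rewrite /kappa; apply: mulr_ge0; last exact: powR_ge0.
  by rewrite mulr_ge0 ?powR_ge0.
rewrite /klpow (gt_eqF Dpos) in hKE.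
set p := Dl `^ theta in hKE.
have p0 : 0 <= p by exact: powR_ge0.
have hp : mu * p <= Num.sqrt c * Dv := le_trans hKE Esq.
have Dne : Dl != 0 by exact: lt0r_neq0.
case/andP: hth => th0 th1.
split=> hth2.
- have e1 : Dl = Dl `^ (1 - 2 * theta) * (p * p).
    rewrite -{1}(powRr1 Dl0) /p -powRD; last by apply/implyP.
    rewrite -powRD; last by apply/implyP.
    congr (_ `^ _); ring.
  set Q := (ell * DY) `^ (1 - 2 * theta).
  have hQ : Dl `^ (1 - 2 * theta) <= Q.
    apply: ge0_ler_powR; first lra.
    - by rewrite nnegrE.
    - by rewrite nnegrE (le_trans Dl0 Dl1).
    - exact: Dl1.
  have hpp : p * p <= c * Dv ^+ 2 / mu ^+ 2.
    rewrite ler_pdivlMr ?exprn_gt0 //.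
    have : (mu * p) ^+ 2 <= (Num.sqrt c * Dv) ^+ 2.
      by rewrite ler_sqr // nnegrE ?mulr_ge0 // ltW.
    by rewrite !exprMn sqr_sqrtr // -expr2 (mulrC (p ^+ 2)).
  have hD2 : Dl <= Q * (c * Dv ^+ 2 / mu ^+ 2).
    rewrite {1}e1; apply: ler_pM => //; first exact: powR_ge0.
    exact: mulr_ge0.
  apply: (le_trans hxab).
  apply: le_trans (ler_wpM2l m20 hD2) _.
  rewrite /varpi /m -/Q le_eqVlt; apply/orP; left; apply/eqP.
  field; apply/andP; split; [exact: lt0r_neq0|exact: lt0r_neq0].
- have th0' : 0 < theta by apply: lt_trans hth2; lra.
  have e1 : Dl = p `^ theta^-1.
    by rewrite /p -powRrM mulfV ?lt0r_neq0 // powRr1.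
  have hp2 : p <= Num.sqrt c / mu * Dv.
    by rewrite mulrAC ler_pdivlMr // mulrC.
  have hD2 : Dl <= (Num.sqrt c / mu) `^ theta^-1 * Dv `^ theta^-1.
    rewrite e1 -powRM; last exact: Dv0.
      apply: ge0_ler_powR => //.
      - by rewrite invr_ge0 ltW.
      - by rewrite nnegrE mulr_ge0 // divr_ge0 // ltW.
    by rewrite divr_ge0 // ltW.
  apply: (le_trans hxab).
  apply: le_trans (ler_wpM2l m20 hD2) _.
  by rewrite /kappa mulrA.
Qed.
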